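(* Let $\epsilon>0$, $\delta\ge0$, $n\ge 1$, let $\mathscr X$ be a set, $T:\mathscr X^n\to\mathbb{R}$, and let $\{\mu_X: X\in\mathscr X^n\}$ be probability measures on $\mathbb{R}$, each absolutely continuous with respect to Lebesgue measure. Suppose $\mu_X$ depends on $X$ only through $T(X)$ and that the family has monotone likelihood ratio in $T(X)$. Then $\{\mu_X\}$ satisfies $(\epsilon,\delta)$-differential privacy if and only if for all $X_1,X_2\in\mathscr X^n$ with $\delta(X_1,X_2)=1$ and all $t\in\mathbb{R}$, $$\mu_{X_1}((-\infty,t))\le e^\epsilon\mu_{X_2}((-\infty,t))+\delta\quad\text{and}\quad \mu_{X_1}((t,\infty))\le e^\epsilon\mu_{X_2}((t,\infty))+\delta.$$
   Context: The Hamming distance on $\mathscr X^n$ is $\delta(X,X')=\#\{i:X_i\ne X'_i\}$. The family $\{\mu_X: X\in\mathscr X^n\}$ satisfies $(\epsilon,\delta)$-differential privacy if for every Borel $B\subseteq\mathbb{R}$ and all $X,X'$ with $\delta(X,X')=1$, $\mu_X(B)\le e^\epsilon\mu_{X'}(B)+\delta$. Monotone likelihood ratio in $T(X)$: writing $f_X$ for the Lebesgue density of $\mu_X$, whenever $T(X)>T(X')$ the ratio $f_X(t)/f_{X'}(t)$ is nondecreasing in $t$. *)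

(* Defs.v *)
From mathcomp Require Import all_boot all_order all_algebra.
From mathcomp Require Import all_classical all_reals all_analysis.
Set Implicit Arguments. Unset Strict Implicit. Unset Printing Implicit Defensive.
Import Order.TTheory GRing.Theory Num.Theory.
Local Open Scope classical_set_scope.
Local Open Scope ring_scope.

(* Hamming distance on Xs^n (datasets are functions 'I_n -> Xs);
   equality on Xs is decided classically, so Xs is an arbitrary set. *)
Definition hamming (Xs : Type) (n : nat) (X X' : 'I_n -> Xs) : nat :=
  #|[set i : 'I_n | `[< X i <> X' i >]]|%N.

Definition diff_private (R : realType) (Xs : Type) (n : nat)
  (mu : ('I_n -> Xs) -> probability R R) (eps delta : R) : Prop :=
  forall (B : set R), measurable B ->
  forall X X' : 'I_n -> Xs, hamming X X' = 1%N ->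
    (mu X B <= (expR eps)%:E * mu X' B + delta%:E)%E.

Definition is_lebesgue_density (R : realType) (mu : probability R R)
  (f : R -> R) : Prop :=
  (forall t, 0 <= f t) /\ measurable_fun setT f /\
  forall B : set R, measurable B ->
    mu B = (\int[@lebesgue_measure R]_(x in B) (f x)%:E)%E.

(* Monotone likelihood ratio in T: whenever T X > T X', the ratio
   f X t / f X' t is nondecreasing in t, stated in cross-multiplied form
   (standard convention handling zero denominators). *)
Definition mono_likelihood_ratio (R : realType) (Xs : Type) (n : nat)
  (T : ('I_n -> Xs) -> R) (f : ('I_n -> Xs) -> R -> R) : Prop :=
  forall X X' : 'I_n -> Xs, T X' < T X ->
  forall s t : R, s <= t -> f X s * f X' t <= f X t * f X' s.

(* Main.v *)
Require Import Defs.
From mathcomp Require Import all_boot all_order all_algebra.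
From mathcomp Require Import all_classical all_reals all_analysis.
From mathcomp Require Import lra measurable_realfun.
Import Order.TTheory GRing.Theory Num.Theory.
Local Open Scope classical_set_scope.
Local Open Scope ring_scope.

Section Aux.
Context {R : realType}.

Lemma mlt (t : R) : measurable [set x : R | x < t].
Proof.
have -> : [set x : R | x < t] = [set` `]-oo, t[] by apply/seteqP; split=> x /=; rewrite in_itv.
exact: measurable_itv.
Qed.

Lemma mgt (t : R) : measurable [set x : R | t < x].
Proof.
have -> : [set x : R | t < x] = [set` `]t, +oo[] by apply/seteqP; split=> x /=; rewrite in_itv /= andbT.
exact: measurable_itv.
Qed.

Lemma thr (D : R -> R) :
  (forall s x, s <= x -> 0 < D s -> 0 <= D x) ->
  (forall x, D x <= 0) \/ (forall x, 0 <= D x) \/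
  exists t, (forall x, x < t -> D x <= 0) /\ (forall x, t < x -> 0 <= D x).
Proof.
move=> HD; set A := [set x | 0 < D x].
have [lbA|nlbA] := pselect (has_lbound A); last first.
  right; left=> x; rewrite leNgt; apply/negP => Dx; apply: nlbA; exists x => y Ay.
  rewrite leNgt; apply/negP => yx.
  by have := HD _ _ (ltW yx) Ay; rewrite leNgt Dx.
have [[a Aa]|nA] := pselect (A !=set0); last first.
  left=> x; rewrite leNgt; apply/negP => Dx; apply: nA; by exists x.
right; right; exists (inf A); split.
  move=> x xt; rewrite leNgt; apply/negP => Dx.
  have := ge_inf lbA (x:=x) Dx; by rewrite leNgt xt.
move=> x tx.
have [e Ae ex] := @inf_adherent R A (x - inf A) (ltac:(by rewrite subr_gt0)) (conj (ex_intro _ a Aa) lbA).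
apply: (HD e) => //; apply: ltW; move: ex; by rewrite addrC subrK.
Qed.

Lemma cross (g h : R -> R) (c : R) : 0 < c -> (forall x, 0 <= g x) -> (forall x, 0 <= h x) ->
  (forall s t, s <= t -> g s * h t <= g t * h s) ->
  forall s x, s <= x -> 0 < g s - c * h s -> 0 <= g x - c * h x.
Proof.
move=> c0 g0 h0 H s x sx Ds.
have H1 := H _ _ sx; have := g0 x; have := h0 x; have := h0 s.
move=> a b d; rewrite leNgt; apply/negP=> Dx.
have hx : 0 < h x.
  rewrite ltNge; apply/negP => hx.
  have hx0 : h x = 0 by apply/eqP; rewrite eq_le hx b.
  rewrite hx0 mulr0 in Dx; lra.
have P1 := mulr_gt0 Ds hx.
have P2 := mulr_ge0 (h0 s) (ltW (x:=0) (y:=c * h x - g x) (ltac:(lra))).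
nra.
Qed.


Lemma K (m1 m2 : probability R R) (g h : R -> R) (a b : R) (S : set R) :
  is_lebesgue_density m1 g -> is_lebesgue_density m2 h -> 0 <= a -> 0 <= b ->
  measurable S -> (forall x, S x -> a * g x <= b * h x) ->
  (a%:E * m1 S <= b%:E * m2 S)%E.
Proof.
move=> [g0 [mg dg]] [h0 [mh dh]] a0 b0 mS H.
rewrite dg // dh //.
have mg' : measurable_fun S (fun x : R => (g x)%:E).
  by apply/measurable_EFinP; apply: measurable_funS mg.
have mh' : measurable_fun S (fun x : R => (h x)%:E).
  by apply/measurable_EFinP; apply: measurable_funS mh.
rewrite -!ge0_integralZl_EFin //; try by move=> x _; rewrite lee_fin.
apply: ge0_le_integral => //.
- by move=> x _; rewrite -EFinM lee_fin mulr_ge0.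
- under eq_fun do rewrite -EFinM.
  apply/measurable_EFinP; apply: measurable_funM; first exact: measurable_cst.
  exact/measurable_EFinP.
- under eq_fun do rewrite -EFinM.
  apply/measurable_EFinP; apply: measurable_funM; first exact: measurable_cst.
  exact/measurable_EFinP.
all: try by move=> x Sx; rewrite -!EFinM lee_fin H.
Qed.


Lemma finE (m : probability R R) (S : set R) : measurable S ->
  m S = (fine (m S))%:E.
Proof. by move=> mS; rewrite fineK // fin_num_measure. Qed.

Lemma fge0 (m : probability R R) (S : set R) : 0 <= fine (m S).
Proof. by apply: fine_ge0; apply: measure_ge0. Qed.

Lemma core (m1 m2 : probability R R) (c d : R) (U L B : set R) :
  measurable U -> measurable L -> measurable B -> U `&` L = set0 ->
  m1 (~` (U `|` L)) = 0%E -> 0 <= c ->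
  (m1 U <= c%:E * m2 U + d%:E)%E ->
  (forall S, measurable S -> S `<=` U -> c%:E * m2 S <= m1 S)%E ->
  (forall S, measurable S -> S `<=` L -> m1 S <= c%:E * m2 S)%E ->
  (m1 B <= c%:E * m2 B + d%:E)%E.
Proof.
move=> mU mL mB UL N0 c0 HU KU KL.
have mN : measurable (~` (U `|` L)) by apply: measurableC; apply: measurableU.
have mBU : measurable (B `&` U) by apply: measurableI.
have mBL : measurable (B `&` L) by apply: measurableI.
have mBN : measurable (B `&` ~` (U `|` L)) by apply: measurableI.
have mUB : measurable (U `&` ~` B) by apply: measurableI => //; apply: measurableC.
have dBUL : (B `&` U) `&` (B `&` L) = set0.
  by rewrite -subset0 => x [[_ ux] [_ lx]]; rewrite -UL.
have dBUL_N : ((B `&` U) `|` (B `&` L)) `&` (B `&` ~` (U `|` L)) = set0.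
  rewrite -subset0 => x [[[_ ux]|[_ lx]] [_ /= nx]]; apply: nx; by [left|right].
have dU : (U `&` B) `&` (U `&` ~` B) = set0.
  by rewrite -subset0 => x [[_ bx] [_ nbx]].
have eB : B = ((B `&` U) `|` (B `&` L)) `|` (B `&` ~` (U `|` L)).
  by rewrite -!setIUr setUv setIT.
have eU : U = (U `&` B) `|` (U `&` ~` B).
  by rewrite -setIUr setUv setIT.
have mBUL : measurable ((B `&` U) `|` (B `&` L)) by apply: measurableU.
have E1 : (m1 B = m1 (B `&` U) + m1 (B `&` L) + m1 (B `&` ~` (U `|` L)))%E.
  by rewrite {1}eB !measureU.
have E2 : (m2 (B `&` U) + m2 (B `&` L) <= m2 B)%E.
  by rewrite -measureU //; apply: le_measure => //; rewrite ?inE // => x [] [].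
have mUB0 : measurable (U `&` B) by apply: measurableI.
have E3 : (m1 U = m1 (B `&` U) + m1 (U `&` ~` B))%E by rewrite {1}eU measureU // (setIC U B).
have E4 : (m2 U = m2 (B `&` U) + m2 (U `&` ~` B))%E by rewrite {1}eU measureU // (setIC U B).
have N1 : m1 (B `&` ~` (U `|` L)) = 0%E.
  apply/eqP; rewrite eq_le measure_ge0 andbT -N0.
  by apply: le_measure => //; rewrite ?inE // => x [].
have K1 := KU _ mUB (fun x (h : (U `&` ~` B) x) => h.1).
have K2 := KL _ mBL (fun x (h : (B `&` L) x) => h.2).
move: E1 E2 E3 E4 N1 K1 K2 HU.
rewrite (finE m1 _ mB) (finE m2 _ mB) (finE m1 _ mBU) (finE m2 _ mBU) (finE m1 _ mBL) (finE m2 _ mBL)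
  (finE m1 _ mBN) (finE m1 _ mUB) (finE m2 _ mUB) (finE m1 _ mU) (finE m2 _ mU).
rewrite -!EFinM -!EFinD !lee_fin => F1 F2 F3 F4 G1 H1 H2 H3.
have F1' := EFin_inj F1; have F3' := EFin_inj F3; have F4' := EFin_inj F4; have G1' := EFin_inj G1.
have P : 0 <= c * (fine (m2 B) - (fine (m2 (B `&` U)) + fine (m2 (B `&` L)))).
  by apply: mulr_ge0 => //; rewrite subr_ge0.
rewrite F4' mulrDr in H3; rewrite mulrBr mulrDr in P.
lra.
Qed.

Lemma finish (m1 m2 : probability R R) (g h : R -> R) (c d : R) (U L B : set R) :
  is_lebesgue_density m1 g -> is_lebesgue_density m2 h -> 0 <= c ->
  measurable U -> measurable L -> measurable B -> U `&` L = set0 ->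
  m1 (~` (U `|` L)) = 0%E ->
  (forall x, U x -> 0 <= g x - c * h x) ->
  (forall x, L x -> g x - c * h x <= 0) ->
  (m1 U <= c%:E * m2 U + d%:E)%E ->
  (m1 B <= c%:E * m2 B + d%:E)%E.
Proof.
move=> dg dh c0 mU mL mB UL N0 HU HL H.
apply: (@core m1 m2 c d U L B mU mL mB UL N0 c0 H).
- move=> S mS SU; rewrite -[X in (_ <= X)%E]mul1e.
  apply: (@K m2 m1 h g c 1 S dh dg c0 ler01 mS) => x Sx; have := HU x (SU x Sx); lra.
- move=> S mS SL; rewrite -[X in (X <= _)%E]mul1e.
  apply: (@K m1 m2 g h 1 c S dg dh ler01 c0 mS) => x Sx; have := HL x (SL x Sx); lra.
Qed.

Lemma nullpt (m : probability R R) (U L : set R) (t : R) :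
  m `<< (@lebesgue_measure R) -> measurable U -> measurable L ->
  (forall x, ~ U x -> ~ L x -> x = t) -> m (~` (U `|` L)) = 0%E.
Proof.
move=> ac mU mL H.
have n1 : (@lebesgue_measure R).-null_set [set t].
  by apply/measure0_null_setP; [exact: measurable_set1 | exact: lebesgue_measure_set1].
apply: (ac _ n1); first by apply: measurableC; apply: measurableU.
move=> x /= nx; apply: H => ?; apply: nx; by [left|right].
Qed.

Lemma cross2 (g h : R -> R) (c : R) : 0 < c -> (forall x, 0 <= g x) -> (forall x, 0 <= h x) ->
  (forall s t, s <= t -> h s * g t <= h t * g s) ->
  forall s x, s <= x -> 0 < g (- s) - c * h (- s) -> 0 <= g (- x) - c * h (- x).
Proof.
move=> c0 g0 h0 H.
apply: (@cross (fun y => g (- y)) (fun y => h (- y)) c c0) => // s t st.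
have := H (- t) (- s); rewrite lerN2 => /(_ st); lra.
Qed.

End Aux.
Theorem lemma6 (R : realType) (eps delta : R) (n : nat) (Xs : Type)
  (T : ('I_n -> Xs) -> R) (mu : ('I_n -> Xs) -> probability R R) :
  0 < eps -> 0 <= delta -> (1 <= n)%N ->
  (forall X, mu X `<< @lebesgue_measure R) ->
  (forall X1 X2, T X1 = T X2 -> mu X1 = mu X2) ->
  (exists f : ('I_n -> Xs) -> R -> R,
      (forall X, is_lebesgue_density (mu X) (f X)) /\
      mono_likelihood_ratio T f) ->
  diff_private mu eps delta <->
  (forall X1 X2 : 'I_n -> Xs, hamming X1 X2 = 1%N -> forall t : R,
     (mu X1 [set x : R | (x < t)%R] <= (expR eps)%:E * mu X2 [set x : R | (x < t)%R] + delta%:E)%E /\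
     (mu X1 [set x : R | (t < x)%R] <= (expR eps)%:E * mu X2 [set x : R | (t < x)%R] + delta%:E)%E).
Proof.
move=> eps0 d0 n1 ac Tmu [f [dens mlr]]; split.
  move=> dp X1 X2 hX t; split; [exact: (dp _ (mlt t)) | exact: (dp _ (mgt t))].
move=> tail B mB X X' hX.
have c1 : 1 <= expR eps by have := expR_ge1Dx eps; lra.
have c0 : 0 < expR eps by apply: expR_gt0.
have [TE|TN] := eqVneq (T X) (T X').
  rewrite (Tmu _ _ TE) (finE (mu X') B mB) -EFinM -EFinD lee_fin.
  have := fge0 (mu X') B; nra.
have [g0 _] := dens X; have [h0 _] := dens X'.
set g := f X; set h := f X'; set c := expR eps.
have caseA : (forall x, g x - c * h x <= 0) -> (mu X B <= c%:E * mu X' B + delta%:E)%E.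
  move=> HD; apply: (@finish _ _ _ g h c delta set0 setT B (dens X) (dens X') (ltW c0)) => //; try by move=> x _; exact: HD.
  - by rewrite set0I.
  - by rewrite set0U setCT measure0.
  - by rewrite !measure0 mule0 add0e lee_fin.
have caseB : (forall x, 0 <= g x - c * h x) -> (mu X B <= c%:E * mu X' B + delta%:E)%E.
  move=> HD; apply: (@finish _ _ _ g h c delta setT set0 B (dens X) (dens X') (ltW c0)) => //; try by move=> x _; exact: HD.
  - by rewrite setI0.
  - by rewrite setU0 setCT measure0.
  - by rewrite !probability_setT mule1 -EFinD lee_fin /c; lra.
move: TN; rewrite neq_lt => /orP[lt|gt].
  have cr := @cross2 _ g h c c0 g0 h0 (mlr _ _ lt).
  have [HD|[HD|[t [Hl Hr]]]] := thr _ cr.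
  - by apply: caseA => x; have := HD (- x); rewrite opprK.
  - by apply: caseB => x; have := HD (- x); rewrite opprK.
  apply: (@finish _ _ _ g h c delta [set x | x < - t] [set x | - t < x] B (dens X) (dens X') (ltW c0)) => //.
  - exact: mlt.
  - exact: mgt.
  - by rewrite -subset0 => x [/= a b]; have := lt_trans b a; rewrite ltxx.
  - apply: (@nullpt _ (mu X) _ _ (- t) (ac X) (mlt _) (mgt _)) => x /= a b.
    by apply/eqP; rewrite eq_le !leNgt; apply/andP; split; apply/negP.
  - move=> x /= xt; have := Hr (- x); rewrite opprK; apply; by rewrite ltrNr.
  - move=> x /= xt; have := Hl (- x); rewrite opprK; apply; by rewrite ltrNl.
  - exact: (tail X X' hX (- t)).1.
have cr := @cross _ g h c c0 g0 h0 (mlr _ _ gt).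
have [HD|[HD|[t [Hl Hr]]]] := thr _ cr.
- exact: caseA.
- exact: caseB.
apply: (@finish _ _ _ g h c delta [set x | t < x] [set x | x < t] B (dens X) (dens X') (ltW c0)) => //.
- exact: mgt.
- exact: mlt.
- by rewrite -subset0 => x [/= a b]; have := lt_trans a b; rewrite ltxx.
- apply: (@nullpt _ (mu X) _ _ t (ac X) (mgt _) (mlt _)) => x /= a b.
  by apply/eqP; rewrite eq_le !leNgt; apply/andP; split; apply/negP.
- exact: (tail X X' hX t).2.
Qed.
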